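(* Let $f:\mathbb Z^2_e\to\mathbb P^3$ and $G:\mathbb Z^2_o\to\{\text{planes in }\mathbb P^3\}$ be generic, and consider the tiling of the plane by the square lattice graph on $\mathbb Z^2$ (edges between lattice-adjacent points, faces the unit squares), with vertex $(i,j)\in\mathbb Z^2_e$ white and labeled by the point $f_{i,j}$, and vertex $(i,j)\in\mathbb Z^2_o$ black and labeled by the plane $G_{i,j}$. Then: (V) the labels of the neighbors of each vertex form a circuit if and only if $f$ is a $Q$-net and $G$ is a $Q^*$-net; and, assuming this, (F) every unit-square face is coherent if and only if $f$ and $g$ are $F$-transforms of each other, where $g:\mathbb Z^2_e\to\mathbb P^3$ is given by $g_{i,j}=G_{i-1,j}\cap G_{i,j-1}\cap G_{i+1,j}\cap G_{i,j+1}$.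
   Context: $\mathbb Z^2_e=\{(i,j): i+j\text{ even}\}$, $\mathbb Z^2_o=\{(i,j): i+j\text{ odd}\}$. A map $f$ from $\mathbb Z^2_e$ (resp. $\mathbb Z^2_o$) to $\mathbb P^3$ is a $Q$-net if for every $(i,j)\in\mathbb Z^2_o$ (resp. $\mathbb Z^2_e$) the four points $f_{i\pm1,j},f_{i,j\pm1}$ are coplanar. A $Q^*$-net is the dual notion: a map to planes such that the four planes $G_{i\pm1,j},G_{i,j\pm1}$ share a common point. Two $Q$-nets $f,g$ with the same domain are $F$-transforms of each other if for every $(i,j)$ in the domain and each sign the four points $f_{i,j},g_{i,j},f_{i+1,j\pm1},g_{i+1,j\pm1}$ are coplanar. A circuit is a linearly dependent set of points (or planes, viewed in the dual space) all of whose proper subsets are independent. A face with vertices labeled by points $A_1,\dots,A_n$ and planes $\ell_1,\dots,\ell_n$ in cyclic (clockwise) order is coherent if the multi-ratio $\frac{\boldsymbol\ell_1(\mathbf A_1)\cdots\boldsymbol\ell_n(\mathbf A_n)}{\boldsymbol\ell_1(\mathbf A_2)\cdots\boldsymbol\ell_n(\mathbf A_1)}$ of lifts to vectors/covectors of $\mathbb C^4$ equals $1$; for a quadrilateral with points $A,B$ and planes $c,d$ this holds iff $A=B$, or $c=d$, or the line $AB$ meets the line $c\cap d$. Generic means all labels are distinct and in general position apart from the imposed conditions. *)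

(* Defs.v *)
(* Points of P^3 = nonzero vectors of C^4 (up to scaling);
   planes of P^3 = nonzero covectors of C^4 (up to scaling), both encoded as
   row vectors 'rV[CC]_4; the pairing of a covector with a vector is the dot
   product. *)
From mathcomp Require Import all_boot all_algebra.
From mathcomp Require Import complex.
From mathcomp Require Import Rstruct.
Set Implicit Arguments. Unset Strict Implicit. Unset Printing Implicit Defensive.
Import GRing.Theory.
Local Open Scope ring_scope.

Definition CC : fieldType := (Rdefinitions.R)[i].

Definition vec4 := 'rV[CC]_4.

Definition pairing (l A : vec4) : CC := \sum_(k < 4) l 0 k * A 0 k.

Definition pt := (int * int)%type.
Definition is_even (p : pt) : bool := ~~ odd (absz (p.1 + p.2)).
Definition is_odd  (p : pt) : bool := odd (absz (p.1 + p.2)).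

Definition nbrs (p : pt) : seq pt :=
  [:: (p.1 + 1, p.2); (p.1 - 1, p.2); (p.1, p.2 + 1); (p.1, p.2 - 1)].

Definition dependent (s : seq vec4) : Prop := ~~ free s.

Definition circuit (s : seq vec4) : Prop :=
  dependent s /\
  forall m : bitseq, size m = size s -> has negb m -> free (mask m s).

(* Four points are coplanar iff their lifts are linearly dependent. *)
Definition coplanar4 (a b c d : vec4) : Prop := dependent [:: a; b; c; d].
(* Four planes share a common point iff their lifts (covectors) are
   linearly dependent. *)
Definition concurrent4 (a b c d : vec4) : Prop := dependent [:: a; b; c; d].

Definition Qnet_e (f : int -> int -> vec4) : Prop :=
  forall i j : int, is_odd (i, j) ->
    coplanar4 (f (i + 1) j) (f (i - 1) j) (f i (j + 1)) (f i (j - 1)).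

Definition Qstarnet_o (G : int -> int -> vec4) : Prop :=
  forall i j : int, is_even (i, j) ->
    concurrent4 (G (i + 1) j) (G (i - 1) j) (G i (j + 1)) (G i (j - 1)).

Definition F_transforms (f g : int -> int -> vec4) : Prop :=
  forall i j : int, is_even (i, j) -> forall s : int, (s = 1 \/ s = -1) ->
    coplanar4 (f i j) (g i j) (f (i + 1) (j + s)) (g (i + 1) (j + s)).

(* Multi-ratio of a face with point labels A_1..A_n and plane labels
   l_1..l_n in cyclic clockwise order A_1, l_1, A_2, l_2, ..., A_n, l_n. *)
Definition multiratio (As ls : seq vec4) : CC :=
  let n := size As in
  (\prod_(k < n) pairing (nth 0 ls k) (nth 0 As k)) /
  (\prod_(k < n) pairing (nth 0 ls k) (nth 0 As ((k + 1) %% n)%N)).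

Definition coherent (As ls : seq vec4) : Prop := multiratio As ls = 1.

(* The unit square face with lower-left corner (i,j), read clockwise
   (i,j) -> (i,j+1) -> (i+1,j+1) -> (i+1,j) starting at its white vertex. *)
Definition face_coherent (f G : int -> int -> vec4) (i j : int) : Prop :=
  if is_even (i, j) then
    coherent [:: f i j; f (i + 1) (j + 1)] [:: G i (j + 1); G (i + 1) j]
  else
    coherent [:: f i (j + 1); f (i + 1) j] [:: G (i + 1) (j + 1); G i j].

Definition nbr_labels (f G : int -> int -> vec4) (p : pt) : seq vec4 :=
  if is_even p then [seq G q.1 q.2 | q <- nbrs p]
  else [seq f q.1 q.2 | q <- nbrs p].

Definition is_meet_point (G : int -> int -> vec4) (i j : int) (x : vec4) : Prop :=
  x != 0 /\ forall q, q \in nbrs (i, j) -> pairing (G q.1 q.2) x = 0.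

(* Genericity: all labels distinct and in general position apart from the
   imposed (Q-net / Q*-net) conditions:
   - any family of at most four points f at pairwise distinct even positions
     is independent unless these positions are exactly the four neighbours of
     an odd vertex (the only imposed coplanarities);
   - dually for the planes G at odd positions;
   - no point f lies on any plane G. *)
Definition generic (f G : int -> int -> vec4) : Prop :=
  (forall s : seq pt, uniq s -> (size s <= 4)%N -> all is_even s ->
     ~ (exists p, is_odd p /\ perm_eq s (nbrs p)) ->
     free [seq f q.1 q.2 | q <- s]) /\
  (forall s : seq pt, uniq s -> (size s <= 4)%N -> all is_odd s ->
     ~ (exists p, is_even p /\ perm_eq s (nbrs p)) ->
     free [seq G q.1 q.2 | q <- s]) /\
  (forall p q : pt, is_even p -> is_odd q -> pairing (G q.1 q.2) (f p.1 p.2) != 0).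

(* Main.v *)
Require Import Defs.
From mathcomp Require Import all_boot all_algebra.
From mathcomp Require Import complex.
From mathcomp Require Import Rstruct.
From mathcomp Require Import zify ring.
Import GRing.Theory.
Local Open Scope ring_scope.

Lemma pairingC (l A : vec4) : pairing l A = pairing A l.
Proof. by rewrite /pairing; apply: eq_bigr => k _; rewrite mulrC. Qed.

Lemma pairingDl (a b A : vec4) : pairing (a + b) A = pairing a A + pairing b A.
Proof. by rewrite /pairing -big_split; apply: eq_bigr => k _; rewrite mxE mulrDl. Qed.

Lemma pairingZl (k : CC) (a A : vec4) : pairing (k *: a) A = k * pairing a A.
Proof. by rewrite /pairing mulr_sumr; apply: eq_bigr => i _; rewrite mxE mulrA. Qed.

Lemma pairing0l (A : vec4) : pairing 0 A = 0.
Proof. by rewrite /pairing big1 // => i _; rewrite mxE mul0r. Qed.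

Lemma pairingNl (a A : vec4) : pairing (- a) A = - pairing a A.
Proof. by rewrite -scaleN1r pairingZl mulN1r. Qed.

Lemma pairing_suml n (F : 'I_n -> vec4) A :
  pairing (\sum_i F i) A = \sum_i pairing (F i) A.
Proof. by elim/big_rec2: _ => [|i a b _ <-]; rewrite ?pairing0l ?pairingDl. Qed.

Lemma span_full (s : seq vec4) : free s -> size s = 4%N -> (<<s>> = fullv)%VS.
Proof.
move=> /eqP Hf Hs; apply/eqP; rewrite eqEdim subvf /= Hf Hs dimvf.
by rewrite dim_matrix.
Qed.

Lemma annihil (s : seq vec4) (x : vec4) : free s -> size s = 4%N ->
  (forall v, v \in s -> pairing v x = 0) -> x = 0.
Proof.
move=> Hf Hs Hv; apply/rowP => k.
pose e : vec4 := \row_j (j == k)%:R.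
have : e \in <<in_tuple s>>%VS by rewrite span_full // memvf.
move/coord_span => He.
have : pairing e x = 0.
  rewrite He pairing_suml big1 // => i _.
  by rewrite pairingZl Hv ?mulr0 // mem_nth.
rewrite /pairing (bigD1 k) //= big1 ?addr0 => [|i /negPf Hi]; last by rewrite /e !mxE Hi mul0r.
by rewrite /e !mxE eqxx mul1r => ->.
Qed.

Lemma key_fwd (A B x y c d : vec4) : free [:: c; d] ->
  pairing c x = 0 -> pairing d x = 0 -> pairing c y = 0 -> pairing d y = 0 ->
  pairing d B != 0 ->
  pairing c A * pairing d B = pairing c B * pairing d A -> ~~ free [:: A; x; B; y].
Proof.
move=> Hcd cx dx cy dy dB Heq; apply/negP => Hf.
set w := pairing d B *: c - pairing c B *: d.
have w0 : w = 0.
  apply: (@annihil [:: A; x; B; y] w Hf erefl) => v; rewrite !inE => /or4P [] /eqP ->;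
  rewrite pairingC /w pairingDl pairingNl !pairingZl ?cx ?dx ?cy ?dy.
  - by rewrite mulrC Heq mulrC subrr.
  - by rewrite !mulr0 subrr.
  - by rewrite mulrC subrr.
  - by rewrite !mulr0 subrr.
move: Hcd; rewrite free_cons span_seq1 => /andP [/negP H _]; apply: H.
apply/vlineP; exists (pairing c B / pairing d B).
move/eqP: w0; rewrite /w subr_eq0 => /eqP E.
by rewrite mulrC -scalerA -E scalerA mulVf // scale1r.
Qed.

Lemma ord4_cases (i : 'I_4) : i = ord0 \/ i = lift ord0 ord0 \/
  i = lift ord0 (lift ord0 ord0) \/ i = lift ord0 (lift ord0 (lift ord0 ord0)).
Proof.
case: i => [[|[|[|[|n]]]] Hi];
  [left|right;left|right;right;left|right;right;right|by []]; exact/val_inj.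
Qed.

Lemma key_bwd (A B x y c d : vec4) : free [:: x; y] ->
  pairing c x = 0 -> pairing d x = 0 -> pairing c y = 0 -> pairing d y = 0 ->
  ~~ free [:: A; x; B; y] -> pairing c A * pairing d B = pairing c B * pairing d A.
Proof.
move=> Hxy cx dx cy dy Hdep; apply/eqP; move: Hdep; apply: contraNT => Hne.
apply/(@freeP _ _ 4 [tuple A; x; B; y]) => k Hk.
rewrite !big_ord_recl big_ord0 /= in Hk.
set k0 := k ord0 in Hk *; set k1 := k (lift ord0 ord0) in Hk *.
set k2 := k (lift ord0 (lift ord0 ord0)) in Hk *.
set k3 := k (lift ord0 (lift ord0 (lift ord0 ord0))) in Hk *.
have Hc := congr1 (fun v => pairing v c) Hk.
have Hd := congr1 (fun v => pairing v d) Hk.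
rewrite /= !pairingDl !pairingZl !pairing0l -!(pairingC c) cx cy in Hc.
rewrite /= !pairingDl !pairingZl !pairing0l -!(pairingC d) dx dy in Hd.
have Ha : k0 * (pairing c A * pairing d B - pairing c B * pairing d A) = 0.
  transitivity (pairing d B * (k0 * pairing c A + (k1 * 0 + (k2 * pairing c B + (k3 * 0 + 0))))
     - pairing c B * (k0 * pairing d A + (k1 * 0 + (k2 * pairing d B + (k3 * 0 + 0))))).
    by ring.
  by rewrite Hc Hd !mulr0 subrr.
have Hb : k2 * (pairing c A * pairing d B - pairing c B * pairing d A) = 0.
  transitivity (pairing c A * (k0 * pairing d A + (k1 * 0 + (k2 * pairing d B + (k3 * 0 + 0))))
     - pairing d A * (k0 * pairing c A + (k1 * 0 + (k2 * pairing c B + (k3 * 0 + 0))))).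
    by ring.
  by rewrite Hc Hd !mulr0 subrr.
have Hne' : pairing c A * pairing d B - pairing c B * pairing d A != 0 by rewrite subr_eq0.
have k00 : k0 = 0 by move/eqP: Ha; rewrite mulf_eq0 (negPf Hne') orbF => /eqP.
have k20 : k2 = 0 by move/eqP: Hb; rewrite mulf_eq0 (negPf Hne') orbF => /eqP.
rewrite k00 k20 !scale0r add0r addr0 !add0r in Hk.
move: Hxy; rewrite free_cons span_seq1 seq1_free => /andP [Hx Hy].
have k10 : k1 = 0.
  apply/eqP; apply: contraNT Hx => Hk1; apply/vlineP; exists (- k3 / k1).
  move/eqP: Hk; rewrite addr_eq0 => /eqP E.
  by rewrite mulrC -scalerA scaleNr -E scalerA mulVf // scale1r.
have k30 : k3 = 0.
  by move/eqP: Hk; rewrite k10 scale0r add0r scaler_eq0 (negPf Hy) orbF => /eqP.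
by move=> i; case: (ord4_cases i) => [->|[->|[->|->]]].
Qed.
Lemma far_not_perm (s : seq pt) a b (Ha : a \in s) (Hb : b \in s) (Hab : b.1 = a.1 + 3) :
  forall p, ~ perm_eq s (nbrs p).
Proof.
case=> p1 p2 /perm_mem E; rewrite E in Ha; rewrite E in Hb.
move: Ha Hb Hab; case: a => a1 a2; case: b => b1 b2.
rewrite /nbrs !inE !xpair_eqE /=. lia.
Qed.
Lemma mr (A B c d : vec4) : multiratio [:: A; B] [:: c; d] =
  (pairing c A * pairing d B) / (pairing c B * pairing d A).
Proof. rewrite /multiratio /= !big_ord_recl !big_ord0 /=. by rewrite !mulr1. Qed.

Section Main.
Variables (f G : int -> int -> vec4).
Hypothesis Hgen : generic f G.

Lemma G_free2 p q : is_odd p -> is_odd q -> p != q -> free [:: G p.1 p.2; G q.1 q.2].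
Proof.
move: Hgen => [_ [H2 _]] Hp Hq Hpq.
apply: (H2 [:: p; q]) => /=.
- by rewrite inE Hpq.
- by [].
- by rewrite Hp Hq.
- by move=> [r [_ /perm_size]].
Qed.

Lemma G_annih4 (s : seq pt) x : uniq s -> size s = 4%N -> all is_odd s ->
  (forall p, ~ perm_eq s (nbrs p)) ->
  (forall q, q \in s -> pairing (G q.1 q.2) x = 0) -> x = 0.
Proof.
move: Hgen => [_ [H2 _]] Hu Hs Ha Hp Hq.
apply: (@annihil [seq G q.1 q.2 | q <- s]).
- apply: H2 => //; first by rewrite Hs.
  by move=> [r [_ Hr]]; apply: (Hp r).
- by rewrite size_map.
- by move=> v /mapP [q Hqs ->]; apply: Hq.
Qed.

Lemma xy_free (x y : vec4) (s : seq pt) : x != 0 -> y != 0 -> uniq s -> size s = 4%N ->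
  all is_odd s -> (forall p, ~ perm_eq s (nbrs p)) ->
  (forall q, q \in s -> pairing (G q.1 q.2) x = 0 \/ pairing (G q.1 q.2) y = 0) ->
  free [:: x; y].
Proof.
move=> Hx Hy Hu Hs Ha Hp Hq.
rewrite free_cons span_seq1 seq1_free Hy andbT; apply/negP => /vlineP [k Hk].
have k0 : k != 0 by apply: contraNneq Hx => k0; rewrite Hk k0 scale0r.
move/negP: Hy; apply; apply/eqP.
apply: (@G_annih4 s y Hu Hs Ha Hp) => q Hqs.
case: (Hq q Hqs) => // H.
move: H; rewrite Hk pairingC pairingZl pairingC => /eqP.
by rewrite mulf_eq0 (negPf k0) /= => /eqP.
Qed.

Lemma key (A B x y c d : vec4) : free [:: c; d] -> free [:: x; y] ->
  pairing c x = 0 -> pairing d x = 0 -> pairing c y = 0 -> pairing d y = 0 ->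
  pairing d B != 0 -> pairing c B != 0 -> pairing d A != 0 ->
  (multiratio [:: A; B] [:: c; d] = 1 <-> ~~ free [:: A; x; B; y]).
Proof.
move=> Hcd Hxy cx dx cy dy dB cB dA; rewrite mr.
have Hden : pairing c B * pairing d A != 0 by rewrite mulf_neq0.
split => H.
- have E : pairing c A * pairing d B = pairing c B * pairing d A.
    by rewrite -[LHS](divfK Hden) H mul1r.
  exact: (@key_fwd A B x y c d Hcd cx dx cy dy dB E).
- by rewrite (@key_bwd A B x y c d Hxy cx dx cy dy H) divff.
Qed.

Variable g : int -> int -> vec4.
Hypothesis Hg : forall i j : int, is_even (i, j) -> is_meet_point G i j (g i j).

Lemma face_even i j : is_even (i, j) ->
  (face_coherent f G i j <-> coplanar4 (f i j) (g i j) (f (i + 1) (j + 1)) (g (i + 1) (j + 1))).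
Proof.
move=> He; rewrite /face_coherent He /coherent /coplanar4 /dependent.
have P1 : is_odd (i, j + 1) by move: He; rewrite /is_odd /is_even /=; lia.
have P2 : is_odd (i + 1, j) by move: He; rewrite /is_odd /is_even /=; lia.
have P3 : is_even (i + 1, j + 1) by move: He; rewrite /is_odd /is_even /=; lia.
have [xnz Hx] := Hg _ _ He; have [ynz Hy] := Hg _ _ P3.
move: Hgen => [_ [_ H3]].
apply: key.
- apply: (@G_free2 (i, j + 1) (i + 1, j)) => //.
  rewrite xpair_eqE; lia.
- apply: (@xy_free _ _ [:: (i + 1, j); (i, j + 1); (i - 1, j); (i + 2, j + 1)]) => //.
  + rewrite /= !inE !xpair_eqE /=; lia.
  + move: He; rewrite /= /is_odd /is_even /=; lia.
  + apply: (@far_not_perm _ (i - 1, j) (i + 2, j + 1)).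
    * by rewrite !inE eqxx !orbT.
    * by rewrite !inE eqxx !orbT.
    * rewrite /=; lia.
  + move=> q; rewrite !inE => /or4P [] /eqP ->;
      [left; apply: Hx| left; apply: Hx| left; apply: Hx| right; apply: Hy];
      rewrite /nbrs !inE !xpair_eqE /=; lia.
- apply: (Hx (i, j + 1)); rewrite /nbrs !inE !xpair_eqE /=; lia.
- apply: (Hx (i + 1, j)); rewrite /nbrs !inE !xpair_eqE /=; lia.
- apply: (Hy (i, j + 1)); rewrite /nbrs !inE !xpair_eqE /=; lia.
- apply: (Hy (i + 1, j)); rewrite /nbrs !inE !xpair_eqE /=; lia.
- exact: (H3 (i + 1, j + 1) (i + 1, j)).
- exact: (H3 (i + 1, j + 1) (i, j + 1)).
- exact: (H3 (i, j) (i + 1, j)).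
Qed.

Lemma face_odd i j : is_odd (i, j) ->
  (face_coherent f G i j <-> coplanar4 (f i (j + 1)) (g i (j + 1)) (f (i + 1) j) (g (i + 1) j)).
Proof.
move=> Ho.
have He : is_even (i, j) = false by move: Ho; rewrite /is_odd /is_even /=; lia.
rewrite /face_coherent He /coherent /coplanar4 /dependent.
have P1 : is_even (i, j + 1) by move: Ho; rewrite /is_odd /is_even /=; lia.
have P2 : is_even (i + 1, j) by move: Ho; rewrite /is_odd /is_even /=; lia.
have P3 : is_odd (i + 1, j + 1) by move: Ho; rewrite /is_odd /is_even /=; lia.
have [xnz Hx] := Hg _ _ P1; have [ynz Hy] := Hg _ _ P2.
move: Hgen => [_ [_ H3]].
apply: key.
- apply: (@G_free2 (i + 1, j + 1) (i, j)) => //.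
  rewrite xpair_eqE; lia.
- apply: (@xy_free _ _ [:: (i + 1, j + 1); (i, j); (i - 1, j + 1); (i + 2, j)]) => //.
  + rewrite /= !inE !xpair_eqE /=; lia.
  + move: Ho; rewrite /= /is_odd /is_even /=; lia.
  + apply: (@far_not_perm _ (i - 1, j + 1) (i + 2, j)).
    * by rewrite !inE eqxx !orbT.
    * by rewrite !inE eqxx !orbT.
    * rewrite /=; lia.
  + move=> q; rewrite !inE => /or4P [] /eqP ->;
      [left; apply: Hx| left; apply: Hx| left; apply: Hx| right; apply: Hy];
      rewrite /nbrs !inE !xpair_eqE /=; lia.
- apply: (Hx (i + 1, j + 1)); rewrite /nbrs !inE !xpair_eqE /=; lia.
- apply: (Hx (i, j)); rewrite /nbrs !inE !xpair_eqE /=; lia.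
- apply: (Hy (i + 1, j + 1)); rewrite /nbrs !inE !xpair_eqE /=; lia.
- apply: (Hy (i, j)); rewrite /nbrs !inE !xpair_eqE /=; lia.
- exact: (H3 (i + 1, j) (i, j)).
- exact: (H3 (i + 1, j) (i + 1, j + 1)).
- exact: (H3 (i, j + 1) (i, j)).
Qed.

End Main.

Lemma nbrs_uniq p : uniq (nbrs p).
Proof. case: p => a b; rewrite /= !inE !xpair_eqE /=; lia. Qed.

Lemma nbrs_par p q : q \in nbrs p -> is_odd q = is_even p.
Proof.
case: p => a b; case: q => c d; rewrite /nbrs /is_odd /is_even !inE !xpair_eqE /=.
move=> H; apply/idP/idP; lia.
Qed.

Theorem mainTheorem8 (f G : int -> int -> vec4) (Hgen : generic f G) :
  ((forall p : pt, circuit (nbr_labels f G p)) <-> (Qnet_e f /\ Qstarnet_o G)) /\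
  (Qnet_e f -> Qstarnet_o G ->
   forall g : int -> int -> vec4,
     (forall i j : int, is_even (i, j) -> is_meet_point G i j (g i j)) ->
     ((forall i j : int, face_coherent f G i j) <-> F_transforms f g)).
Proof.
split.
- split.
  + move=> Hc; split.
    * move=> i j Ho.
      have He : is_even (i, j) = false by move: Ho; rewrite /is_odd /is_even /=; lia.
      have := (Hc (i, j)).1; by rewrite /nbr_labels He.
    * move=> i j He.
      have := (Hc (i, j)).1; by rewrite /nbr_labels He.
  + move=> [HQ HQs] p; split.
    * rewrite /nbr_labels; case: ifP => He.
      - by case: p He => i j He; apply: HQs.
      - case: p He => i j He; apply: HQ.
        by move: He; rewrite /is_odd /is_even /= => /negbT; rewrite negbK.
    * move=> m Hm Hneg.
      have Hsz : size m = 4%N by rewrite Hm /nbr_labels; case: ifP => _; rewrite size_map.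
      have Hcnt : (count id m < 4)%N.
        have h2 : (count id m + count negb m)%N = size m by exact: (count_predC id m).
        have := has_count negb m; rewrite Hneg Hsz in h2 * => /esym h1; lia.
      have Hsm : size (mask m (nbrs p)) = count id m by rewrite size_mask // Hsz.
      move: Hgen => [H1 [H2 _]].
      rewrite /nbr_labels; case: ifP => He; rewrite -map_mask.
      - apply: H2.
        + apply: mask_uniq; exact: nbrs_uniq.
        + rewrite Hsm; lia.
        + by apply/allP => q /mem_mask Hq; rewrite (@nbrs_par p q Hq).
        + by move=> [r [_ /perm_size]]; rewrite Hsm /= => E; rewrite E in Hcnt.
      - apply: H1.
        + apply: mask_uniq; exact: nbrs_uniq.
        + rewrite Hsm; lia.
        + apply/allP => q /mem_mask Hq.
          move: (@nbrs_par p q Hq); rewrite He /is_odd /is_even => ->; by [].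
        + by move=> [r [_ /perm_size]]; rewrite Hsm /= => E; rewrite E in Hcnt.
- move=> _ _ g Hg; split.
  + move=> Hf i j He s [->|->].
    * exact: (@face_even f G Hgen g Hg i j He).1.
    * have Ho : is_odd (i, j - 1) by move: He; rewrite /is_odd /is_even /=; lia.
      have := (@face_odd f G Hgen g Hg _ _ Ho).1 (Hf _ _).
      by rewrite subrK.
  + move=> HF i j; case: (boolP (is_even (i, j))) => He.
    * apply: (@face_even f G Hgen g Hg i j He).2; exact: (HF i j He 1 (or_introl erefl)).
    * have Ho : is_odd (i, j) by move: He; rewrite /is_odd /is_even /=; lia.
      have P1 : is_even (i, j + 1) by move: Ho; rewrite /is_odd /is_even /=; lia.
      apply: (@face_odd f G Hgen g Hg _ _ Ho).2.
      have := HF i (j + 1) P1 (-1) (or_intror erefl).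
      by rewrite addrK.
Qed.
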